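(* Let $\ell\ge2$ and $V=(\mathbb{F}_2)^{2^\ell}$. If $G<\mathrm{GL}(V)$ is a subgroup isomorphic to $\mathrm{Alt}((\mathbb{F}_2)^{128})$, then $\ell\ge67$.
   Context: $\mathrm{Alt}((\mathbb{F}_2)^{128})$ denotes the alternating group on the set $(\mathbb{F}_2)^{128}$ (of cardinality $2^{128}$). *)

(* Defs.v *)
From mathcomp Require Import all_boot all_algebra all_fingroup all_solvable.
Set Implicit Arguments. Unset Strict Implicit. Unset Printing Implicit Defensive.

Definition F2_128 := 'rV['F_2]_128.

(* Main.v *)
Require Import Defs.
From mathcomp Require Import all_boot all_algebra all_fingroup all_solvable.
From mathcomp Require Import zify.

Lemma logn3_one m : 0 < m -> 3 %| m -> ~~ (9 %| m) -> logn 3 m = 1.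
Proof.
move=> m0 d3 nd9.
have h1 : 1 <= logn 3 m by rewrite -pfactor_dvdn.
have h2 : ~~ (2 <= logn 3 m) by rewrite -pfactor_dvdn.
lia.
Qed.

Lemma cube_step q : 0 < q ->
  logn 3 ((3*q+1)^3 - 1) = (logn 3 (3*q)).+1.
Proof.
move=> q0.
have -> : (3*q+1)^3 - 1 = 3*q*(9*(q*q+q)+3).
  by rewrite !expnS expn0; nia.
rewrite lognM ?muln_gt0 //; last lia.
rewrite (@logn3_one (9*(q*q+q)+3)) ?addn1 //.
- by rewrite addn_gt0 orbT.
- by rewrite dvdn_addr // (dvdn_mulr _ (isT : 3 %| 9)).
- by rewrite dvdn_addr ?dvdn_mulr.
Qed.

Lemma lte4 k : 0 < k -> logn 3 (4^k - 1) = (logn 3 k).+1.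
Proof.
elim: k {-2}k (leqnn k) => [|n IH] k lek k0; first by lia.
have [d3|nd3] := boolP (3 %| k).
  case/dvdnP: d3 => m km; subst k.
  have m0 : 0 < m by lia.
  have e4 : 4^m %% 3 = 1 by rewrite -modnXm (_ : _ %% _ = 1) // exp1n.
  have q0 : 0 < 4^m %/ 3.
    rewrite divn_gt0 //. have : 4^1 <= 4^m by rewrite leq_exp2l. rewrite expn1. exact: leq_trans.
  have h : 4^m = 3 * (4^m %/ 3) + 1 by rewrite {1}(divn_eq (4^m) 3) e4 mulnC.
  rewrite expnM.
  have h' : 3*(4^m %/ 3) = 4^m - 1 by lia.
  rewrite h cube_step // h' IH //; last by lia.
  by rewrite lognM // (pfactorK 1) // addn1.
rewrite (logn_coprime (m := k)); last by rewrite prime_coprime.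
have km := divn_eq k 3.
set a := k %/ 3 in km; set r := k %% 3 in km nd3.
have r3 : r < 3 by rewrite ltn_mod.
have rn0 : r != 0 by move: nd3; rewrite /dvdn.
have e64 : 64^a %% 9 = 1 by rewrite -modnXm (_ : _ %% _ = 1) // exp1n.
have h64 : 64^a = 9 * (64^a %/ 9) + 1 by rewrite {1}(divn_eq (64^a) 9) e64 mulnC.
have h4 : 4^k = 64^a * 4^r by rewrite km expnD (mulnC a 3) expnM.
set b := 64^a %/ 9 in h64. clearbody a r b.
apply: logn3_one.
- by rewrite subn_gt0 -{1}(expn0 4) ltn_exp2l //; lia.
- rewrite h4 h64 mulnDl mul1n -addnBA; last by rewrite expn_gt0.
  rewrite dvdn_addr; last by apply: dvdn_mulr; apply: dvdn_mulr.
  by case: r r3 rn0 {km h4} => [|[|[|]]].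
- rewrite h4 h64 mulnDl mul1n -addnBA; last by rewrite expn_gt0.
  rewrite dvdn_addr; last by rewrite -mulnA dvdn_mulr.
  by case: r r3 rn0 {km h4} => [|[|[|]]].
Qed.

Lemma v3_pow2 i : 0 < i -> logn 3 (2^i - 1) <= (logn 3 i).+1.
Proof.
move=> i0; rewrite -lte4 //.
have p4 : 0 < 4^i - 1 by rewrite subn_gt0 -{1}(expn0 4) ltn_exp2l.
apply: dvdn_leq_log => //.
rewrite (_ : 4^i - 1 = (2^i)^2 - 1^2); last by rewrite -expnM mulnC expnM.
by rewrite subn_sqr ?exp1n dvdn_mulr.
Qed.

Lemma logn3_small i : 0 < i -> i <= 2^66 -> logn 3 i <= 66.
Proof.
move=> i0 hi.
have h1 : 3 ^ logn 3 i <= i := dvdn_leq i0 (pfactor_dvdnn 3 i).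
have h2 : 2 ^ logn 3 i <= 3 ^ logn 3 i.
  case e: (logn 3 i) => [|v]; first by [].
  by rewrite leq_exp2r.
by rewrite -(leq_exp2l _ _ (isT : 1 < 2)) (leq_trans h2 (leq_trans h1 hi)).
Qed.

Lemma gl_prod n : n <= 2^66 ->
  logn 3 (\prod_(0 <= i < n) (2^i.+1 - 1)) <= 67 * n.
Proof.
elim: n => [|n IH] hn; first by rewrite big_geq.
have pos : forall i, 0 < 2^i.+1 - 1.
  by move=> i; rewrite subn_gt0 -{1}(expn0 2) ltn_exp2l.
rewrite big_nat_recr //= lognM; last by apply: pos.
  have h1 := IH (ltnW hn).
  have h2 := @v3_pow2 n.+1 (ltn0Sn n).
  have h3 := @logn3_small n.+1 (ltn0Sn n) hn.
  lia.
by rewrite prodn_gt0.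
Qed.

Lemma final_arith : 67 * 2^66 < 2^128 %/ 3.
Proof.
rewrite leq_divRL; last by [].
rewrite (_ : 128 = 66 + 62); last by [].
rewrite expnD.
have hY : 2^8 <= 2^62 by rewrite leq_exp2l.
have hX : 0 < 2^66 by rewrite expn_gt0.
move: hY hX; rewrite (_ : 2^8 = 256); last by [].
move: (2^66) (2^62) => X Y hY hX.
nia.
Qed.

Lemma alt_low : 2^128 %/ 3 <= logn 3 #|('Alt_F2_128)%G|.
Proof.
have hN : #|F2_128| = 2^128 by rewrite /F2_128 card_mx card_Fp.
have N1 : 1 < #|F2_128| by rewrite hN -{1}(expn0 2) ltn_exp2l.
have hA := card_Alt N1.
have hlow : 2^128 %/ 3 <= logn 3 (#|F2_128|`!).
  rewrite (@logn_fact 3 _ isT) big_ltn; last by rewrite ltnS hN expn_gt0.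
  by rewrite hN expn1 leq_addr.
rewrite -hA (@logn_Gauss 3 2) in hlow; last by [].
exact: hlow.
Qed.

Theorem mainTheorem12 (l : nat) (hl : 2 <= l)
  (G : {group {'GL_(2 ^ l)['F_2]}})
  (hG : G \isog 'Alt_F2_128) :
  67 <= l.
Proof.
rewrite leqNgt; apply/negP => hl66.
have n0 : 0 < 2^l by rewrite expn_gt0.
have pos : 0 < 2 ^ 'C(2^l, 2) * \prod_(0 <= i < 2^l) (2 ^ i.+1 - 1).
  rewrite muln_gt0 expn_gt0 /=; apply: prodn_gt0 => i.
  by rewrite subn_gt0 -{1}(expn0 2) ltn_exp2l.
have hl2 : 2^l <= 2^66 by rewrite leq_exp2l.
have hg := @gl_prod (2^l) hl2.
have c2 : 67 * 2^l <= 67 * 2^66 by rewrite leq_mul2l hl2 orbT.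
have hE : logn 3 (2 ^ 'C(2^l, 2) * \prod_(0 <= i < 2^l) (2 ^ i.+1 - 1))
   = logn 3 (\prod_(0 <= i < 2^l) (2 ^ i.+1 - 1)).
  by apply: logn_Gauss; apply: coprimeXr.
have hcard := card_isog hG.
have hdiv : #|G| %| #|GLgroup (2^l) 'F_2| by apply: cardSg; apply: subsetT.
rewrite (card_GL _ n0) in hdiv.
rewrite (@card_Fp 2 isT) in hdiv.
rewrite hcard big_add1 in hdiv.
rewrite (_ : (2^l).+1.-1 = 2^l) in hdiv; last by [].
have hup := @dvdn_leq_log 3 _ _ pos hdiv.
clear hdiv hcard hG.
have hup2 := leq_trans hup (eq_leq hE).
have c1 := leq_trans alt_low (leq_trans hup2 hg).
have := leq_trans c1 c2.
rewrite leqNgt final_arith => H; discriminate H.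
Qed.
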